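(* Let $N_p\ge1$ be an integer and $F,G\in\mathbb{C}$ with $|G|<1$ and $|G-F|<1/N_p$. Define the $(N_p+1)\times(N_p+1)$ lower bidiagonal matrices $\mathbf{M}_F$, $\mathbf{M}_G$ with all diagonal entries $1$, subdiagonal entries $-F$ (respectively $-G$), and all other entries zero, and let $\mathbf{E}=\mathbf{I}-\mathbf{M}_G^{-1}\mathbf{M}_F$. Then $\|\mathbf{E}\|_\infty<1$; consequently the Parareal error iteration $\mathbf{e}^{k}=\mathbf{E}\mathbf{e}^{k-1}$ satisfies $\|\mathbf{e}^{k}\|_\infty<\|\mathbf{e}^{k-1}\|_\infty$ whenever $\mathbf{e}^{k-1}\neq 0$.
   Context: $\mathbf{E}$ is the error-propagation matrix of the Parareal iteration applied to a scalar linear ODE, where $F$ and $G$ are the complex amplification factors of the fine and coarse propagators over one processor interval and $N_p$ is the number of processors. $\|\cdot\|_\infty$ denotes the vector $\infty$-norm and its induced matrix norm. *)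

(* Defs.v *)
From HB Require Import structures.
From mathcomp Require Import all_boot all_order all_algebra.
Set Implicit Arguments. Unset Strict Implicit. Unset Printing Implicit Defensive.
Import Order.TTheory GRing.Theory Num.Theory.
Local Open Scope ring_scope.

Definition vnorm_inf (C : numClosedFieldType) (n : nat) (v : 'cV[C]_n) : C :=
  \big[Num.max/0]_(i < n) `|v i 0|.

Definition mxnorm_inf (C : numClosedFieldType) (m n : nat) (A : 'M[C]_(m, n)) : C :=
  \big[Num.max/0]_(i < m) \sum_(j < n) `|A i j|.

Definition bidiag (C : numClosedFieldType) (n : nat) (a : C) : 'M[C]_n :=
  \matrix_(i < n, j < n)
    (if i == j then 1 else if (j.+1 == i)%N then - a else 0).

Definition parareal_E (C : numClosedFieldType) (n : nat) (F G : C) : 'M[C]_n :=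
  1%:M - invmx (bidiag n G) *m bidiag n F.

(* Main.v *)
Require Import Defs.
From HB Require Import structures.
From mathcomp Require Import all_boot all_order all_algebra.
Import Order.TTheory GRing.Theory Num.Theory.
Local Open Scope ring_scope.

Section S.
Variable C : numClosedFieldType.
Implicit Types n : nat.

Lemma max_lt (x y z : C) : x < z -> y < z -> Num.max x y < z.
Proof. by rewrite /Num.max; case: ifP. Qed.

Lemma max_ge0 (x y : C) : 0 <= x -> 0 <= y -> 0 <= Num.max x y.
Proof. by rewrite /Num.max; case: ifP. Qed.

Lemma max_gel (x y : C) : x <= Num.max x y.
Proof. by rewrite /Num.max; case: ifP => // /ltW. Qed.

Lemma max_ger (x y : C) : 0 <= x -> 0 <= y -> y <= Num.max x y.
Proof.
move=> hx hy; rewrite /Num.max; case: ifP => // /negbT.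
by rewrite real_ltNge ?ger0_real // negbK.
Qed.

Lemma bigmax_ge0 n (f : 'I_n -> C) : (forall i, 0 <= f i) ->
  0 <= \big[Num.max/0]_(i < n) f i.
Proof. by move=> h; apply: (big_ind (fun x => 0 <= x)) => //; apply: max_ge0. Qed.

Lemma bigmax_ge n (f : 'I_n -> C) j : (forall i, 0 <= f i) ->
  f j <= \big[Num.max/0]_(i < n) f i.
Proof.
move=> h; rewrite unlock /reducebig.
have : j \in index_enum 'I_n by rewrite mem_index_enum.
elim: (index_enum _) => //= x r IH; rewrite inE => /orP [/eqP -> | jr].
  exact: max_gel.
apply: le_trans (IH jr) _; apply: max_ger => //.
by elim: r {IH jr} => //= y r IH; apply: max_ge0.
Qed.

Lemma bigmax_lt n (f : 'I_n -> C) z : 0 < z -> (forall i, f i < z) ->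
  \big[Num.max/0]_(i < n) f i < z.
Proof. move=> z0 h; apply: (big_ind (fun x => x < z)) => // x y; exact: max_lt. Qed.

Lemma bidiag_unit n (a : C) : bidiag n a \in unitmx.
Proof.
rewrite unitmxE det_trig.
  rewrite big1 ?unitr1 // => i _; by rewrite mxE eqxx.
apply/is_trig_mxP => i j lt; rewrite mxE.
have -> : (i == j) = false by apply/negbTE; rewrite -val_eqE /= neq_ltn lt.
by rewrite ifN //; apply/negP => /eqP h; move: lt; rewrite -h ltnNge leqnSn.
Qed.


Lemma mul_bidiag n (a : C) (A : 'M[C]_n.+1) (i j : 'I_n.+1) :
  (bidiag n.+1 a *m A) i j =
  A i j - (if (0 < i)%N then a * A (inord i.-1) j else 0).
Proof.
rewrite mxE (bigD1 i) //= mxE eqxx mul1r.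
case: (posnP i) => [i0 | ip].
  rewrite big1 ?addr0 ?subr0 // => k ki; rewrite mxE.
  rewrite eq_sym (negbTE ki) i0 /= mul0r //.
have hk : (i.-1 < n.+1)%N by exact: leq_ltn_trans (leq_pred _) (ltn_ord i).
have nk : (inord i.-1 : 'I_n.+1) != i.
  by rewrite -val_eqE /= inordK // neq_ltn ltn_predL ip.
rewrite (bigD1 (inord i.-1)) //= mxE eq_sym (negbTE nk) inordK // prednK //.
rewrite eqxx big1 ?addr0 ?mulNr //.
move=> k /andP [ki kj]; rewrite mxE eq_sym (negbTE ki).
case: eqP => [hk'|]; last by rewrite mul0r.
exfalso; move/negP: kj; apply; apply/eqP/val_inj.
by rewrite /= inordK // -hk'.
Qed.

Lemma E_rec n (F G : C) (i j : 'I_n.+1) :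
  parareal_E n.+1 F G i j =
  (if (j.+1 == i)%N then F - G else 0) +
  (if (0 < i)%N then G * parareal_E n.+1 F G (inord i.-1) j else 0).
Proof.
have D : bidiag n.+1 G *m parareal_E n.+1 F G = bidiag n.+1 G - bidiag n.+1 F.
  by rewrite /parareal_E mulmxBr mulmx1 mulmxA mulmxV ?mul1mx // bidiag_unit.
move: (parareal_E n.+1 F G) D => E D.
have := congr1 (fun M : 'M[C]_n.+1 => M i j) D; rewrite /= mul_bidiag !mxE.
move=> h; rewrite -[E i j](subrK (if (0 < i)%N then G * E (inord i.-1) j else 0)) h.
congr (_ + _).
case: (eqVneq i j) => [->|ij]; first by rewrite subrr (gtn_eqF (ltnSn j)).
by case: eqP => _; rewrite ?opprK ?subrr // addrC.
Qed.

Lemma E_row n (F G : C) (i : 'I_n.+1) : `|G| <= 1 ->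
  \sum_j `|parareal_E n.+1 F G i j| <= i%:R * `|G - F|.
Proof.
move=> hG.
suff H : forall k (i : 'I_n.+1), nat_of_ord i = k ->
  \sum_j `|parareal_E n.+1 F G i j| <= k%:R * `|G - F| by exact: H.
clear i.
elim=> [|k IH] i0 hi; move: i0 hi => i hi.
  rewrite mul0r big1 // => j _; rewrite E_rec hi /= add0r normr0 //.
have hk : (k < n.+1)%N by move: (ltn_ord i); rewrite hi => /ltnW.
have hinord : (inord i.-1 : 'I_n.+1) = inord k by rewrite hi.
have step : \sum_j `|parareal_E n.+1 F G i j| <= \sum_(j < n.+1) (`|if (j.+1 == i)%N then F - G else 0| +
   `|G| * `|parareal_E n.+1 F G (inord k) j|).
  apply: ler_sum => j _; rewrite E_rec hi /= -hinord hi /=.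
  by apply: le_trans (ler_normD _ _) _; rewrite normrM.
apply: le_trans step _.
rewrite big_split /= -mulr_sumr.
have -> : \sum_(j < n.+1) `|if (j.+1 == i)%N then F - G else 0| = `|G - F|.
  rewrite (bigD1 (inord k)) //= inordK // hi eqxx distrC big1 ?addr0 //.
  move=> j hj; case: eqP => h; last by rewrite normr0.
  exfalso; move/negP: hj; apply; apply/eqP/val_inj; rewrite /= inordK //.
  by case: h.
rewrite -natr1 mulrDl mul1r addrC lerD2r.
apply: le_trans (_ : 1 * \sum_(j < n.+1) `|parareal_E n.+1 F G (inord k) j| <= _).
  by apply: ler_wpM2r => //; apply: sumr_ge0 => j _.
rewrite mul1r; apply: (IH (inord k)); rewrite inordK //.
Qed.
End S.

Theorem mainTheorem5 (C : numClosedFieldType) (Np : nat) (F G : C) :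
  (1 <= Np)%N ->
  `|G| < 1 ->
  `|G - F| < 1 / Np%:R ->
  mxnorm_inf (parareal_E Np.+1 F G) < 1 /\
  (forall e : nat -> 'cV[C]_(Np.+1),
     (forall k, e k.+1 = parareal_E Np.+1 F G *m e k) ->
     forall k, e k != 0 -> vnorm_inf (e k.+1) < vnorm_inf (e k)).
Proof.
move=> hNp hG hGF.
have hG1 : `|G| <= 1 by exact: ltW.
have np0 : 0 < (Np%:R : C) by rewrite ltr0n.
have hNGF : Np%:R * `|G - F| < 1.
  by move: hGF; rewrite mul1r -(mulr1 (Np%:R^-1)) ltr_pdivlMl.
have hr : forall i : 'I_Np.+1, \sum_j `|parareal_E Np.+1 F G i j| < 1.
  move=> i; apply: le_lt_trans (@E_row _ Np F G i hG1) _.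
  apply: le_lt_trans hNGF; apply: ler_wpM2r => //.
  by rewrite ler_nat -ltnS ltn_ord.
split; first by rewrite /mxnorm_inf; apply: bigmax_lt => //; exact: ltr01.
move=> e he k nz; rewrite he.
move: (e k) nz => v nz.
set m := vnorm_inf v.
have hv : forall j, `|v j 0| <= m.
  by move=> j; apply: (@bigmax_ge _ _ (fun i => `|v i 0|)) => i.
have m0 : 0 < m.
  case: (pickP (fun j => v j 0 != 0)) => [j hj | none].
    by apply: lt_le_trans (hv j); rewrite normr_gt0.
  exfalso; move/negP: nz; apply; apply/eqP/matrixP => a b.
  by rewrite ord1 mxE; move: (none a) => /negbFE/eqP.
rewrite /vnorm_inf; apply: bigmax_lt => // i.
rewrite mxE; apply: le_lt_trans (ler_norm_sum _ _ _) _.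
apply: le_lt_trans (_ : (\sum_j `|parareal_E Np.+1 F G i j|) * m < _).
  rewrite mulr_suml; apply: ler_sum => j _; rewrite normrM.
  by apply: ler_wpM2l => //.
by rewrite gtr_pMl.
Qed.
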